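(* Let $(X,\sigma,\tau)$ be a separable, chronologically dense Lorentzian metric space satisfying the S-property. Then $\overline{\tau}:\overline{X}\times\overline{X}\to[0,\infty]$ is lower semicontinuous with respect to the chronological topology $\sigma_{chr}$ of $\overline X$ (product topology on $\overline X\times\overline X$).
   Context: A Lorentzian metric space $(X,\sigma,\tau)$ is a topological space with $\tau:X\times X\to[0,\infty]$ lower semicontinuous and satisfying $\tau(x,z)\geq\tau(x,y)+\tau(y,z)$ whenever $\tau(x,y),\tau(y,z)>0$. Write $x\ll y$ iff $\tau(x,y)>0$, $I^+(x)=\{y:x\ll y\}$, $I^-(x)=\{y:y\ll x\}$, $I^\pm[A]=\bigcup_{a\in A}I^\pm(a)$. Future (resp. past) chain: $x_n\ll x_{n+1}$ (resp. $x_{n+1}\ll x_n$) for all $n$. Separable: there is a countable $S$ with $x\ll y\Rightarrow\exists s\in S$, $x\ll s\ll y$. Chronologically dense: every $x$ with $I^-(x)\neq\emptyset$ (resp. $I^+(x)\neq\emptyset$) is the $\sigma$-limit of a future (resp. past) chain. Past set: $P=I^-[P]$; $\downarrow S=I^-[\{p:p\ll q\ \forall q\in S\}]$; IP: past set not the union of two proper past subsets; PIP: IP of the form $I^-(p)$; future sets, $\uparrow S$, IF, PIF dually. For nonempty IP $P$ and IF $F$, $P\sim_S F$ iff $P$ is a maximal IP in $\downarrow F$ and $F$ a maximal IF in $\uparrow P$; $P\sim_S\emptyset$ (resp. $\emptyset\sim_S F$) if the nonempty $P$ (resp. $F$) is S-related to no nonempty IF (resp. IP). S-property: for every $x$, $I^-(x)\sim_S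 I^+(x)$, and no PIF other than $I^+(x)$ (resp. PIP other than $I^-(x)$) is S-related to $I^-(x)$ (resp. $I^+(x)$). c-completion $\overline X=\{(P,F):P\sim_S F\}$. For a sequence $\{(P_n,F_n)\}$ in $\overline X$, $(P,F)\in L(\{(P_n,F_n)\})$ iff ($P\neq\emptyset\Rightarrow P\subset LI(P_n)$ and $P$ is a maximal IP in $LS(P_n)$) and ($F\neq\emptyset\Rightarrow F\subset LI(F_n)$ and $F$ is a maximal IF in $LS(F_n)$), where $LI(A_n)=\bigcup_n\bigcap_{k\ge n}A_k$, $LS(A_n)=\bigcap_n\bigcup_{k\ge n}A_k$. $\sigma_{chr}$: $C\subset\overline X$ is closed iff $L(s)\subset C$ for every sequence $s$ in $C$. $\overline\tau((P,F),(P',F'))=0$ if $F=\emptyset$ or $P'=\emptyset$, and otherwise $\lim_n\tau(q_n,p'_n)$ for any past chain $\{q_n\}$ with $I^+[\{q_n\}]=F$ and future chain $\{p'_n\}$ with $I^-[\{p'_n\}]=P'$ (well defined). *)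

(* Defs.v *)
From HB Require Import structures.
From mathcomp Require Import all_boot all_order all_algebra.
From mathcomp Require Import all_classical all_reals all_analysis.
Set Implicit Arguments. Unset Strict Implicit. Unset Printing Implicit Defensive.
Import Order.TTheory GRing.Theory Num.Theory.
Local Open Scope classical_set_scope.
Local Open Scope ereal_scope.

Section LMS.
Context {R : realType} {X : topologicalType}.
Variable tau : X -> X -> \bar R.

Definition is_LMS : Prop :=
  (forall x y, 0 <= tau x y) /\
  lower_semicontinuous (fun xy : X * X => tau xy.1 xy.2) /\
  (forall x y z, 0 < tau x y -> 0 < tau y z -> tau x y + tau y z <= tau x z).

Definition chr (x y : X) : Prop := 0 < tau x y.
Definition Ifut (x : X) : set X := [set y | chr x y].
Definition Ipast (x : X) : set X := [set y | chr y x].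
Definition IfutS (A : set X) : set X := [set y | exists2 a, A a & chr a y].
Definition IpastS (A : set X) : set X := [set y | exists2 a, A a & chr y a].

Definition future_chain (x : nat -> X) : Prop := forall n, chr (x n) (x n.+1).
Definition past_chain (x : nat -> X) : Prop := forall n, chr (x n.+1) (x n).

Definition separable : Prop :=
  exists S : set X, countable S /\
    forall x y, chr x y -> exists2 s, S s & chr x s /\ chr s y.

Definition chron_dense : Prop :=
  (forall x, Ipast x !=set0 ->
     exists xn : nat -> X, future_chain xn /\ xn @ \oo --> x) /\
  (forall x, Ifut x !=set0 ->
     exists xn : nat -> X, past_chain xn /\ xn @ \oo --> x).

Definition past_set (P : set X) : Prop := P = IpastS P.
Definition future_set (F : set X) : Prop := F = IfutS F.

Definition downS (S : set X) : set X := IpastS [set p | forall q, S q -> chr p q].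
Definition upS (S : set X) : set X := IfutS [set p | forall q, S q -> chr q p].

Definition IP (P : set X) : Prop :=
  P !=set0 /\ past_set P /\
  ~ (exists P1 P2, past_set P1 /\ past_set P2 /\ P1 `<` P /\ P2 `<` P /\
                   P = P1 `|` P2).
Definition IF (F : set X) : Prop :=
  F !=set0 /\ future_set F /\
  ~ (exists F1 F2, future_set F1 /\ future_set F2 /\ F1 `<` F /\ F2 `<` F /\
                   F = F1 `|` F2).

Definition maxIP (P A : set X) : Prop :=
  IP P /\ P `<=` A /\ (forall P', IP P' -> P `<=` P' -> P' `<=` A -> P' = P).
Definition maxIF (F A : set X) : Prop :=
  IF F /\ F `<=` A /\ (forall F', IF F' -> F `<=` F' -> F' `<=` A -> F' = F).

Definition Srel_ne (P F : set X) : Prop :=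
  IP P /\ IF F /\ maxIP P (downS F) /\ maxIF F (upS P).

(* S-relation including the empty set cases; (emptyset, emptyset) is never
   S-related. *)
Definition Srel (P F : set X) : Prop :=
  Srel_ne P F \/
  (IP P /\ F = set0 /\ forall F', IF F' -> ~ Srel_ne P F') \/
  (P = set0 /\ IF F /\ forall P', IP P' -> ~ Srel_ne P' F).

Definition S_property : Prop :=
  forall x, Srel (Ipast x) (Ifut x) /\
    (forall y, IF (Ifut y) -> Srel (Ipast x) (Ifut y) -> Ifut y = Ifut x) /\
    (forall y, IP (Ipast y) -> Srel (Ipast y) (Ifut x) -> Ipast y = Ipast x).

(* c-completion, as a set of pairs (P, F) *)
Definition Xbar : set (set X * set X) := [set pf | Srel pf.1 pf.2].

Definition LI (A : nat -> set X) : set X :=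
  [set x | exists n, forall k, (n <= k)%N -> A k x].
Definition LS (A : nat -> set X) : set X :=
  [set x | forall n, exists k, (n <= k)%N /\ A k x].

Definition Llim (s : nat -> set X * set X) : set (set X * set X) :=
  [set pf | Xbar pf /\
    (pf.1 !=set0 -> pf.1 `<=` LI (fun n => (s n).1) /\
                    maxIP pf.1 (LS (fun n => (s n).1))) /\
    (pf.2 !=set0 -> pf.2 `<=` LI (fun n => (s n).2) /\
                    maxIF pf.2 (LS (fun n => (s n).2)))].

(* chronological topology on Xbar, given by its closed sets *)
Definition chr_closed (C : set (set X * set X)) : Prop :=
  C `<=` Xbar /\
  forall s : nat -> set X * set X, (forall n, C (s n)) -> Llim s `<=` C.
Definition chr_open (U : set (set X * set X)) : Prop :=
  U `<=` Xbar /\ chr_closed (Xbar `\` U).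

Definition taubar_spec (a b : set X * set X) (v : \bar R) : Prop :=
  let F := a.2 in let P' := b.1 in
  (exists q p : nat -> X, past_chain q /\ IfutS (range q) = F /\
      future_chain p /\ IpastS (range p) = P' /\
      (fun n => tau (q n) (p n)) @ \oo --> v) /\
  (forall q p : nat -> X, past_chain q -> IfutS (range q) = F ->
      future_chain p -> IpastS (range p) = P' ->
      (fun n => tau (q n) (p n)) @ \oo --> v).

Definition taubar (a b : set X * set X) : \bar R :=
  if `[< a.2 = set0 \/ b.1 = set0 >] then 0 else xget 0 (taubar_spec a b).

(* lower semicontinuity of a function on Xbar x Xbar, w.r.t. the product
   of the chronological topologies (open boxes form a base). *)
Definition chr_lsc2 (f : set X * set X -> set X * set X -> \bar R) : Prop :=
  forall a b (r : R), Xbar a -> Xbar b -> r%:E < f a b ->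
    exists U V, chr_open U /\ chr_open V /\ U a /\ V b /\
      forall a' b', U a' -> V b' -> r%:E < f a' b'.

End LMS.

(* Main.v *)
Require Import Defs.
From mathcomp Require Import all_boot all_order all_algebra.
From mathcomp Require Import all_classical all_reals all_analysis.
Set Implicit Arguments. Unset Strict Implicit. Unset Printing Implicit Defensive.
Import Order.TTheory GRing.Theory Num.Theory.
Local Open Scope classical_set_scope.
Local Open Scope ereal_scope.

Definition trans_chr (R : realType) (X : topologicalType) (tau : X -> X -> \bar R) :=
  forall x y z, chr tau x y -> chr tau y z -> chr tau x z.

Lemma trans_flip (R : realType) (X : topologicalType) (tau : X -> X -> \bar R) :
  trans_chr tau -> trans_chr (fun x y => tau y x).
Proof. move=> H x y z xy yz; exact: H yz xy. Qed.

Lemma past_le (R : realType) (X : topologicalType) (tau : X -> X -> \bar R)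
  (Htr : trans_chr tau) (q : nat -> X) x k m :
  past_chain tau q -> chr tau (q k) x -> (k <= m)%N -> chr tau (q m) x.
Proof.
move=> qc qk; elim: m => [|m IH].
  by rewrite leqn0 => /eqP <-.
rewrite leq_eqVlt => /orP [/eqP <- //|]; rewrite ltnS => km.
exact: Htr (qc m) (IH km).
Qed.

Lemma fut_le (R : realType) (X : topologicalType) (tau : X -> X -> \bar R)
  (Htr : trans_chr tau) (p : nat -> X) x k m :
  future_chain tau p -> chr tau x (p k) -> (k <= m)%N -> chr tau x (p m).
Proof.
move=> pc pk km.
exact: (@past_le R X (fun x y => tau y x) (trans_flip Htr) p x k m pc pk km).
Qed.

Lemma key (R : realType) (X : topologicalType) (tau : X -> X -> \bar R)
  (t0 : forall x y, 0 <= tau x y)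
  (tri : forall x y z, 0 < tau x y -> 0 < tau y z -> tau x y + tau y z <= tau x z)
  (Htr : trans_chr tau) q p x y k j :
  past_chain tau q -> future_chain tau p -> chr tau x y ->
  chr tau (q k) x -> chr tau y (p j) ->
  exists N, tau x y <= tau (q N) (p N).
Proof.
move=> qc pc xy qx yp.
exists (maxn k j).
have qN : chr tau (q (maxn k j)) x by apply: past_le qx _ => //; exact: leq_maxl.
have yN : chr tau y (p (maxn k j)) by apply: fut_le yp _ => //; exact: leq_maxr.
have xN : chr tau x (p (maxn k j)) by exact: Htr xy yN.
apply: (le_trans (leeDl _ (t0 y (p (maxn k j))))).
apply: (le_trans (tri _ _ _ xy yN)).
apply: le_trans (tri _ _ _ qN xN).
by rewrite addeC leeDl.
Qed.

Lemma mono (R : realType) (X : topologicalType) (tau : X -> X -> \bar R)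
  (t0 : forall x y, 0 <= tau x y)
  (tri : forall x y z, 0 < tau x y -> 0 < tau y z -> tau x y + tau y z <= tau x z)
  (Htr : trans_chr tau) q p :
  past_chain tau q -> future_chain tau p ->
  {homo (fun n => tau (q n) (p n)) : n m / (n <= m)%N >-> n <= m}.
Proof.
move=> qc pc; apply/nondecreasing_seqP => n /=.
case: (boolP (0 < tau (q n) (p n))) => h; last first.
  by rewrite -leNgt in h; exact: le_trans h (t0 _ _).
have h1 : chr tau (q n.+1) (p n) by exact: Htr (qc n) h.
apply: le_trans (tri _ _ _ h1 (pc n)).
apply: le_trans (leeDl _ (t0 _ _)).
apply: le_trans (tri _ _ _ (qc n) h).
by rewrite addeC leeDl.
Qed.

Definition useq (R : realType) (X : topologicalType) (tau : X -> X -> \bar R)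
  (q p : nat -> X) := fun n => tau (q n) (p n).

Lemma sup_le (R : realType) (X : topologicalType) (tau : X -> X -> \bar R)
  (t0 : forall x y, 0 <= tau x y)
  (tri : forall x y z, 0 < tau x y -> 0 < tau y z -> tau x y + tau y z <= tau x z)
  (Htr : trans_chr tau) q p q' p' :
  past_chain tau q -> future_chain tau p ->
  past_chain tau q' -> future_chain tau p' ->
  IfutS tau (range q) = IfutS tau (range q') ->
  IpastS tau (range p) = IpastS tau (range p') ->
  ereal_sup (range (useq tau q p)) <= ereal_sup (range (useq tau q' p')).
Proof.
move=> qc pc qc' pc' eq ep.
apply: ge_ereal_sup => _ [m _ <-]; rewrite /useq.
case: (boolP (0 < tau (q m) (p m))) => h; last first.
  rewrite -leNgt in h; apply: le_trans h _.
  apply: le_trans (t0 (q' 0%N) (p' 0%N)) _.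
  by apply: ereal_sup_ubound; exists 0%N.
have : IfutS tau (range q') (q m) by rewrite -eq; exists (q m.+1) => //; exists m.+1.
case=> _ [k _ <-] qk.
have : IpastS tau (range p') (p m) by rewrite -ep; exists (p m.+1) => //; exists m.+1.
case=> _ [j _ <-] pj.
have [N HN] := key t0 tri Htr qc' pc' h qk pj.
apply: le_trans HN _.
by apply: ereal_sup_ubound; exists N.
Qed.

Lemma spec_val (R : realType) (X : topologicalType) (tau : X -> X -> \bar R)
  (t0 : forall x y, 0 <= tau x y)
  (tri : forall x y z, 0 < tau x y -> 0 < tau y z -> tau x y + tau y z <= tau x z)
  (Htr : trans_chr tau) q p v :
  past_chain tau q -> future_chain tau p ->
  (fun n => tau (q n) (p n)) @ \oo --> v ->
  v = ereal_sup (range (useq tau q p)).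
Proof.
move=> qc pc cv.
have cv2 := ereal_nondecreasing_cvgn (mono t0 tri Htr qc pc).
exact: (cvg_unique (@ereal_hausdorff R) cv cv2).
Qed.

Lemma taubar_val (R : realType) (X : topologicalType) (tau : X -> X -> \bar R)
  (t0 : forall x y, 0 <= tau x y)
  (tri : forall x y z, 0 < tau x y -> 0 < tau y z -> tau x y + tau y z <= tau x z)
  (Htr : trans_chr tau) (a b : set X * set X) q p :
  past_chain tau q -> future_chain tau p ->
  IfutS tau (range q) = a.2 -> IpastS tau (range p) = b.1 ->
  taubar tau a b = ereal_sup (range (useq tau q p)).
Proof.
move=> qc pc eq ep.
rewrite /taubar asboolF; last first.
  case=> h.
    have : a.2 (q 0%N) by rewrite -eq; exists (q 1%N) => //; exists 1%N.
    by rewrite h.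
  have : b.1 (p 0%N) by rewrite -ep; exists (p 1%N) => //; exists 1%N.
  by rewrite h.
have ex : exists v, taubar_spec tau a b v.
  exists (ereal_sup (range (useq tau q p))); split.
    exists q, p; do 4 (split => //).
    exact: ereal_nondecreasing_cvgn (mono t0 tri Htr qc pc).
  move=> q' p' qc' eq' pc' ep'.
  have -> : ereal_sup (range (useq tau q p)) = ereal_sup (range (useq tau q' p')).
    apply/eqP; rewrite eq_le; apply/andP; split.
      by apply: sup_le => //; rewrite ?eq ?eq' ?ep ?ep'.
    by apply: sup_le => //; rewrite ?eq ?eq' ?ep ?ep'.
  exact: ereal_nondecreasing_cvgn (mono t0 tri Htr qc' pc').
have [_ H] := xgetPex 0 ex.
have := spec_val t0 tri Htr qc pc (H q p qc eq pc ep).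
by move=> ->.
Qed.

Lemma taubar_ge0 (R : realType) (X : topologicalType) (tau : X -> X -> \bar R)
  (t0 : forall x y, 0 <= tau x y)
  (tri : forall x y z, 0 < tau x y -> 0 < tau y z -> tau x y + tau y z <= tau x z)
  (Htr : trans_chr tau) (a b : set X * set X) :
  0 <= taubar tau a b.
Proof.
rewrite /taubar; case: asboolP => _ //.
case: (pselect (exists v, taubar_spec tau a b v)) => ex; last first.
  by rewrite xgetPN // => v hv; apply: ex; exists v.
have [[q [p [qc [_ [pc [_ cv]]]]]] _] := xgetPex 0 ex.
rewrite (spec_val t0 tri Htr qc pc cv).
apply: le_trans (t0 (q 0%N) (p 0%N)) _.
by apply: ereal_sup_ubound; exists 0%N.
Qed.

Lemma IF_dir (R : realType) (X : topologicalType) (tau : X -> X -> \bar R)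
  (Htr : trans_chr tau)
  (Hint : forall x y, chr tau x y -> exists m, chr tau x m /\ chr tau m y) F :
  IF tau F -> forall x y, F x -> F y ->
  exists2 z, F z & chr tau z x /\ chr tau z y.
Proof.
move=> [_ [Ffut Hno]] x y Fx Fy; apply: contrapT => Hn.
have Hn' : forall z, F z -> chr tau z x -> chr tau z y -> False.
  by move=> z Fz zx zy; apply: Hn; exists z.
have fut : forall c, future_set tau
    [set w | F w /\ exists z, F z /\ chr tau z w /\ ~ chr tau z c].
  move=> c; apply/seteqP; split.
    move=> w [Fw [z [Fz [zw nz]]]].
    have [m [zm mw]] := Hint _ _ zw.
    exists m => //; split; first by rewrite Ffut; exists z.
    by exists z.
  move=> w [w1 [Fw1 [z [Fz [zw1 nz]]]] w1w].
  split; first by rewrite Ffut; exists w1.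
  exists z; split => //; split => //; exact: Htr zw1 w1w.
apply: Hno.
exists [set w | F w /\ exists z, F z /\ chr tau z w /\ ~ chr tau z y].
exists [set w | F w /\ exists z, F z /\ chr tau z w /\ ~ chr tau z x].
split; first exact: fut.
split; first exact: fut.
split.
  split; first by move=> w [].
  move=> sub; have [_ [z [_ [zy nz]]]] := sub y Fy; exact: nz zy.
split.
  split; first by move=> w [].
  move=> sub; have [_ [z [_ [zx nz]]]] := sub x Fx; exact: nz zx.
apply/seteqP; split; last by move=> w [[]|[]].
move=> w Fw; have := Fw; rewrite {1}Ffut => -[z Fz zw].
case: (pselect (chr tau z y)) => zy.
  right; split => //; exists z; split => //; split => // zx.
  exact: Hn' z Fz zx zy.
by left; split => //; exists z.
Qed.

Fixpoint seqb (X : Type) (g : nat -> X -> X) (x0 : X) (n : nat) : X :=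
  match n with 0 => x0 | n'.+1 => g n' (seqb g x0 n') end.

Lemma IF_chain (R : realType) (X : topologicalType) (tau : X -> X -> \bar R)
  (Htr : trans_chr tau) F :
  separable tau -> IF tau F ->
  exists q, past_chain tau q /\ IfutS tau (range q) = F.
Proof.
move=> [S [cS HS]] HIF.
have Hint : forall x y, chr tau x y -> exists m, chr tau x m /\ chr tau m y.
  by move=> x y xy; have [s _ h] := HS x y xy; exists s.
have Hdir := IF_dir Htr Hint HIF.
case: HIF => [[x0 Fx0] [Ffut _]].
have [f finj] := countable_injP _ cS.
pose P n z := forall s, S s -> F s -> f s = n -> chr tau z s.
have step : forall n x, F x -> exists z, F z /\ chr tau z x /\ P n z.
  move=> n x Fx.
  case: (pselect (exists s, S s /\ F s /\ f s = n)).
    case=> s [Ss [Fs fs]].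
    have [z Fz [zx zs]] := Hdir x s Fx Fs.
    exists z; split => //; split => // s' Ss' Fs' fs'.
    have -> : s' = s by apply: finj; [exact: mem_set|exact: mem_set|congruence].
    done.
  move=> nex; have := Fx; rewrite {1}Ffut => -[z Fz zx].
  exists z; split => //; split => // s Ss Fs fs.
  by exfalso; apply: nex; exists s.
pose g n x := xget x0 [set z | F z /\ chr tau z x /\ P n z].
pose q := seqb g x0.
have HF : forall n, F (q n).
  elim=> [//|n IH] /=.
  by have [] := xgetPex x0 (step n _ IH).
have Hs : forall n, F (q n.+1) /\ chr tau (q n.+1) (q n) /\ P n (q n.+1).
  by move=> n; exact: (xgetPex x0 (step n _ (HF n))).
exists q; split; first by move=> n; case: (Hs n) => _ [].
apply/seteqP; split.
  move=> w [_ [n _ <-] qw].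
  by rewrite Ffut; exists (q n).
move=> w Fw; have := Fw; rewrite {1}Ffut => -[u Fu uw].
have [s Ss [us sw]] := HS _ _ uw.
have Fs : F s by rewrite Ffut; exists u.
exists (q (f s).+1); first by exists (f s).+1.
apply: Htr sw.
by case: (Hs (f s)) => _ [_ H]; apply: H.
Qed.

Lemma IP_chain (R : realType) (X : topologicalType) (tau : X -> X -> \bar R)
  (Htr : trans_chr tau) P :
  separable tau -> IP tau P ->
  exists p, future_chain tau p /\ IpastS tau (range p) = P.
Proof.
move=> [S [cS HS]] HIP.
have sep' : separable (fun x y => tau y x).
  exists S; split => // x y xy.
  have [s Ss [h1 h2]] := HS y x xy.
  by exists s.
exact: (@IF_chain R X (fun x y => tau y x) (trans_flip Htr) P sep' HIP).
Qed.

Lemma Xbar_IF (R : realType) (X : topologicalType) (tau : X -> X -> \bar R) a :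
  Xbar tau a -> a.2 !=set0 -> IF tau a.2.
Proof.
case=> [[_ [H _]]|[[_ [H _]]|[_ [H _]]]] // [x hx].
by move: hx; rewrite H.
Qed.

Lemma Xbar_IP (R : realType) (X : topologicalType) (tau : X -> X -> \bar R) a :
  Xbar tau a -> a.1 !=set0 -> IP tau a.1.
Proof.
case=> [[H _]|[[H _]|[H _]]] // [x hx].
by move: hx; rewrite H.
Qed.

Lemma open_fut (R : realType) (X : topologicalType) (tau : X -> X -> \bar R) x0 :
  chr_open tau [set a | Xbar tau a /\ a.2 x0].
Proof.
split; first by move=> ? [].
split; first by move=> ? [].
move=> s Hs pf [HX [_ H2]]; split => //; move=> [_ Hq].
have ne : pf.2 !=set0 by exists x0.
have [sub _] := H2 ne.
have [n Hn] := sub x0 Hq.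
have [h1 h2] := Hs n.
by apply: h2; split => //; apply: Hn.
Qed.

Lemma open_past (R : realType) (X : topologicalType) (tau : X -> X -> \bar R) x0 :
  chr_open tau [set a | Xbar tau a /\ a.1 x0].
Proof.
split; first by move=> ? [].
split; first by move=> ? [].
move=> s Hs pf [HX [H1 _]]; split => //; move=> [_ Hq].
have ne : pf.1 !=set0 by exists x0.
have [sub _] := H1 ne.
have [n Hn] := sub x0 Hq.
have [h1 h2] := Hs n.
by apply: h2; split => //; apply: Hn.
Qed.

Theorem mainTheorem18 (R : realType) (X : topologicalType)
  (tau : X -> X -> \bar R) :
  is_LMS tau -> separable tau -> chron_dense tau -> S_property tau ->
  chr_lsc2 tau (taubar tau).
Proof.
move=> [t0 [_ tri]] sep _ _ a b r Xa Xb rlt.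
have Htr : trans_chr tau.
  move=> x y z xy yz; rewrite /chr.
  apply: lt_le_trans (tri _ _ _ xy yz).
  by apply: lt_le_trans xy _; rewrite leeDl.
have [hr|hr] := ltP r 0%R.
  exists (Xbar tau), (Xbar tau).
  have op : chr_open tau (Xbar tau).
    split => //; split; first by move=> ? [].
    by move=> s Hs; have [h1 h2] := Hs 0%N.
  do 4 (split => //).
  move=> a' b' _ _.
  apply: lt_le_trans (taubar_ge0 t0 tri Htr a' b').
  by rewrite lte_fin.
have ne : forall (A : set X), A = set0 -> False -> False by [].
have a2 : a.2 !=set0.
  apply/set0P/negP => /eqP h; move: rlt.
  by rewrite /taubar asboolT; [rewrite lte_fin ltNge hr | left].
have b1 : b.1 !=set0.
  apply/set0P/negP => /eqP h; move: rlt.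
  by rewrite /taubar asboolT; [rewrite lte_fin ltNge hr | right].
have [q [qc eq]] := IF_chain Htr sep (Xbar_IF Xa a2).
have [p [pc ep]] := IP_chain Htr sep (Xbar_IP Xb b1).
rewrite (taubar_val t0 tri Htr qc pc eq ep) in rlt.
have [y [n _ yn] rn] := ereal_sup_gt rlt.
rewrite -yn in rn.
rewrite /useq in rn.
have hn : chr tau (q n) (p n) by apply: le_lt_trans rn; rewrite lee_fin.
exists [set a | Xbar tau a /\ a.2 (q n)], [set a | Xbar tau a /\ a.1 (p n)].
split; first exact: open_fut.
split; first exact: open_past.
split.
  by split => //; rewrite -eq; exists (q n.+1) => //; exists n.+1.
split.
  by split => //; rewrite -ep; exists (p n.+1) => //; exists n.+1.
move=> a' b' [Xa' qa'] [Xb' pb'].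
have [q' [qc' eq']] := IF_chain Htr sep (Xbar_IF Xa' (ex_intro (fun x => a'.2 x) _ qa')).
have [p' [pc' ep']] := IP_chain Htr sep (Xbar_IP Xb' (ex_intro (fun x => b'.1 x) _ pb')).
rewrite (taubar_val t0 tri Htr qc' pc' eq' ep').
move: qa'; rewrite -eq' => -[_ [k _ <-] qk].
move: pb'; rewrite -ep' => -[_ [j _ <-] pj].
have [N HN] := key t0 tri Htr qc' pc' hn qk pj.
apply: lt_le_trans rn _; apply: le_trans HN _.
by apply: ereal_sup_ubound; exists N.
Qed.
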